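(* Let $\mathcal{H}$ be a finite-dimensional complex Hilbert space, let $\ket{\psi_1},\ket{\psi_2}\in\mathcal{H}$ be pure states, and let $\alpha,\beta\in[0,1]$. For every ontological model (as defined in the context) for these two preparations, $$S^{Gam}_Q(\psi_1,\psi_2;\alpha,\beta)\le S^{Gam}_\Lambda(\psi_1,\psi_2;\alpha,\beta)=1-\frac{\omega_\Lambda(\psi_1,\psi_2;\alpha,\beta)}{2},$$ where $S^{Gam}_\Lambda(\psi_1,\psi_2;\alpha,\beta)=\tfrac12\int_\Lambda\max\big(\tilde\mu_1(\lambda),\tilde\mu_2(\lambda),\tilde\mu_3(\lambda)\big)d\lambda-\beta$ and $$\omega_\Lambda(\psi_1,\psi_2;\alpha,\beta)=T_1+T_2+T_3-T_4,$$ with $T_1=\int_\Lambda\min(\tilde\mu_1,\tilde\mu_2)d\lambda$, $T_2=\int_\Lambda\min(\tilde\mu_1,\tilde\mu_3)d\lambda-(\alpha+\beta)$, $T_3=\int_\Lambda\min(\tilde\mu_2,\tilde\mu_3)d\lambda-(\alpha+\beta)$, $T_4=\int_\Lambda\min(\tilde\mu_1,\tilde\mu_2,\tilde\mu_3)d\lambda$, and $\tilde\mu_1(\lambda)=(1+\beta)\mu(\lambda|\psi_1)$, $\tilde\mu_2(\lambda)=(1+\beta)\mu(\lambda|\psi_2)$, $\tilde\mu_3(\lambda)=(\alpha+\beta)\big(\mu(\lambda|\psi_1)+\mu(\lambda|\psi_2)\big)$.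
   Context: For a state $\sigma$ and POVM $\mathcal{M}=\{M_k\}$, $p(k|\sigma,\mathcal{M})=\mathrm{Tr}(\sigma M_k)$. Quantum gambling value: $S^{Gam}_Q(\psi_1,\psi_2;\alpha,\beta)=\tfrac12\max_{\mathcal{M}}\big(p(1|\psi_1,\mathcal{M})-\beta p(2|\psi_1,\mathcal{M})+\alpha p(3|\psi_1,\mathcal{M})+p(2|\psi_2,\mathcal{M})-\beta p(1|\psi_2,\mathcal{M})+\alpha p(3|\psi_2,\mathcal{M})\big)$, the maximum over all three-outcome POVMs $\mathcal{M}=\{M_1,M_2,M_3\}$ on $\mathcal{H}$. Ontological model: a measure space $(\Lambda,d\lambda)$; for each preparation $\psi_j$ ($j=1,2$) a probability density $\mu(\lambda|\psi_j)\ge 0$ with $\int_\Lambda\mu(\lambda|\psi_j)d\lambda=1$; for each $n$-outcome POVM $\mathcal{M}$ response functions $\xi(k|\lambda,\mathcal{M})\ge0$ with $\sum_k\xi(k|\lambda,\mathcal{M})=1$ for all $\lambda$; such that $\bra{\psi_j}M_k\ket{\psi_j}=\int_\Lambda\mu(\lambda|\psi_j)\xi(k|\lambda,\mathcal{M})d\lambda$ for all $j,\mathcal{M},k$. *)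

(* Defs.v *)
From HB Require Import structures.
From mathcomp Require Import all_boot all_order all_algebra.
From mathcomp Require Import complex.
From mathcomp Require Import all_classical all_reals all_analysis.
Set Implicit Arguments. Unset Strict Implicit. Unset Printing Implicit Defensive.
Import Order.TTheory GRing.Theory Num.Theory.
Import ComplexField.
Local Open Scope ring_scope.
Local Open Scope classical_set_scope.

Section Defs.
Variable R : realType.
Local Notation C := (R[i]).

Definition adj m n (A : 'M[C]_(m, n)) : 'M[C]_(n, m) := map_mx Num.conj A^T.

Definition qform n (A : 'M[C]_n) (v : 'cV[C]_n) : C := (adj v *m A *m v) 0 0.

Definition unit_vector n (v : 'cV[C]_n) : Prop := (adj v *m v) 0 0 = 1.

Definition psd n (A : 'M[C]_n) : Prop :=
  adj A = A /\ forall v : 'cV[C]_n, 0 <= qform A v.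

Definition is_povm n k (M : 'I_k -> 'M[C]_n) : Prop :=
  (forall i, psd (M i)) /\ \sum_(i < k) M i = 1%:M.

(* p(i | psi, M) = Tr(|psi><psi| M_i) = <psi|M_i|psi> (a real number for a POVM) *)
Definition prob n k (psi : 'cV[C]_n) (M : 'I_k -> 'M[C]_n) (i : 'I_k) : R :=
  complex.Re (qform (M i) psi).

(* quantum gambling value: sup (attained max) over three-outcome POVMs *)
Definition S_Q n (psi1 psi2 : 'cV[C]_n) (alpha beta : R) : R :=
  sup [set r | exists M : 'I_3 -> 'M[C]_n, is_povm M /\
    r = 2^-1 * (prob psi1 M 0 - beta * prob psi1 M 1 + alpha * prob psi1 M 2
              + prob psi2 M 1 - beta * prob psi2 M 0 + alpha * prob psi2 M 2)].

(* ontological model for the two preparations psi1, psi2 on (L, dlambda):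
   densities mu1 = mu(.|psi1), mu2 = mu(.|psi2), response functions xi. *)
Definition ontological_model n (psi1 psi2 : 'cV[C]_n)
  (d : measure_display) (L : measurableType d) (dl : {measure set L -> \bar R})
  (mu1 mu2 : L -> R)
  (xi : forall k, ('I_k -> 'M[C]_n) -> 'I_k -> L -> R) : Prop :=
  [/\ measurable_fun setT mu1 /\ measurable_fun setT mu2,
      (forall l, 0 <= mu1 l) /\ (forall l, 0 <= mu2 l),
      (\int[dl]_l (mu1 l)%:E = 1)%E /\ (\int[dl]_l (mu2 l)%:E = 1)%E &
      forall k (M : 'I_k -> 'M[C]_n), is_povm M ->
        [/\ (forall i, measurable_fun setT (xi k M i)),
            (forall i l, 0 <= xi k M i l),
            (forall l, \sum_(i < k) xi k M i l = 1),
            (forall i, (prob psi1 M i)%:E = \int[dl]_l (mu1 l * xi k M i l)%:E)%E &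
            (forall i, (prob psi2 M i)%:E = \int[dl]_l (mu2 l * xi k M i l)%:E)%E]].

Section Gamble.
Variables (d : measure_display) (L : measurableType d) (dl : {measure set L -> \bar R}).
Variables (mu1 mu2 : L -> R) (alpha beta : R).

Definition mut1 l := (1 + beta) * mu1 l.
Definition mut2 l := (1 + beta) * mu2 l.
Definition mut3 l := (alpha + beta) * (mu1 l + mu2 l).

Definition S_Lam : \bar R :=
  ((2^-1)%:E * \int[dl]_l (Num.max (mut1 l) (Num.max (mut2 l) (mut3 l)))%:E
   - beta%:E)%E.

Definition T1 : \bar R := (\int[dl]_l (Num.min (mut1 l) (mut2 l))%:E)%E.
Definition T2 : \bar R := (\int[dl]_l (Num.min (mut1 l) (mut3 l))%:E - (alpha + beta)%:E)%E.
Definition T3 : \bar R := (\int[dl]_l (Num.min (mut2 l) (mut3 l))%:E - (alpha + beta)%:E)%E.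
Definition T4 : \bar R :=
  (\int[dl]_l (Num.min (mut1 l) (Num.min (mut2 l) (mut3 l)))%:E)%E.

Definition omega_Lam : \bar R := (T1 + T2 + T3 - T4)%E.
End Gamble.
End Defs.

(* Main.v *)
Require Import Defs.
From HB Require Import structures.
From mathcomp Require Import all_boot all_order all_algebra.
From mathcomp Require Import complex.
From mathcomp Require Import all_classical all_reals all_analysis.
From mathcomp Require Import lra measurable_realfun.
Import Order.TTheory GRing.Theory Num.Theory.
Import ComplexField.
Local Open Scope ring_scope.
Local Open Scope classical_set_scope.

Lemma iD d (T : measurableType d) (R : realType) (mu : {measure set T -> \bar R}) (f g : T -> R) :
  mu.-integrable setT (EFin \o f) -> mu.-integrable setT (EFin \o g) ->
  mu.-integrable setT (EFin \o (fun x => f x + g x)).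
Proof. by move=> hf hg; apply: eq_integrable (integrableD _ hf hg) => // x _; rewrite /= EFinD. Qed.

Lemma iB d (T : measurableType d) (R : realType) (mu : {measure set T -> \bar R}) (f g : T -> R) :
  mu.-integrable setT (EFin \o f) -> mu.-integrable setT (EFin \o g) ->
  mu.-integrable setT (EFin \o (fun x => f x - g x)).
Proof. by move=> hf hg; apply: eq_integrable (integrableB _ hf hg) => // x _; rewrite /= EFinB. Qed.

Lemma iZ d (T : measurableType d) (R : realType) (mu : {measure set T -> \bar R}) (k : R) (f : T -> R) :
  mu.-integrable setT (EFin \o f) ->
  mu.-integrable setT (EFin \o (fun x => k * f x)).
Proof. by move=> hf; apply: eq_integrable (integrableZl _ k hf) => // x _; rewrite /= EFinM. Qed.

Lemma ile d (T : measurableType d) (R : realType) (mu : {measure set T -> \bar R}) (f g : T -> R) :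
  measurable_fun setT f -> (forall x, `|f x| <= g x) ->
  mu.-integrable setT (EFin \o g) -> mu.-integrable setT (EFin \o f).
Proof.
move=> mf hfg hg; apply: (le_integrable _ _ _ hg) => //.
  exact/measurable_EFinP.
by move=> x _ /=; rewrite lee_fin (le_trans (hfg x)) // ler_norm.
Qed.

Lemma iE d (T : measurableType d) (R : realType) (mu : {measure set T -> \bar R}) (f : T -> R) :
  mu.-integrable setT (EFin \o f) ->
  (\int[mu]_x (f x)%:E)%E = (Rintegral mu setT f)%:E.
Proof. by move=> hf; rewrite /Rintegral fineK // (integrable_fin_num _ hf). Qed.

Lemma max3 (R : realDomainType) (a b c : R) :
  Num.max a (Num.max b c) = a + b + c - Num.min a b - Num.min a c - Num.min b c
    + Num.min a (Num.min b c).
Proof.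
rewrite !maxEle !minEle.
by case: (leP b c) => ?; repeat (case: leP => ?); lra.
Qed.

Arguments iE {d T R mu f}.
Arguments iD {d T R mu f g}.
Arguments iB {d T R mu f g}.
Arguments iZ {d T R mu k f}.
Arguments ile {d T R mu f g}.

Lemma nbmax (R : realDomainType) (a b c : R) : 0 <= a -> 0 <= b -> 0 <= c ->
  `|Num.max a (Num.max b c)| <= a + b + c.
Proof. move=> *; rewrite ger0_norm; rewrite !maxEle; case: (leP b c) => ?; case: (leP a c) => ?; case: (leP a b) => ?; lra. Qed.

Lemma nbmin (R : realDomainType) (a b c x y : R) : 0 <= a -> 0 <= b -> 0 <= c ->
  0 <= x -> 0 <= y -> x <= a + b + c -> `|Num.min x y| <= a + b + c.
Proof. move=> *; rewrite ger0_norm; rewrite !minEle; case: (leP x y) => ?; lra. Qed.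

Lemma nbmin3 (R : realDomainType) (a b c : R) : 0 <= a -> 0 <= b -> 0 <= c ->
  `|Num.min a (Num.min b c)| <= a + b + c.
Proof. move=> *; rewrite ger0_norm; rewrite !minEle; case: (leP b c) => ?; case: (leP a c) => ?; case: (leP a b) => ?; lra. Qed.

Lemma maxge (R : realDomainType) (a b c : R) :
  [/\ a <= Num.max a (Num.max b c), b <= Num.max a (Num.max b c) &
      c <= Num.max a (Num.max b c)].
Proof. by rewrite !maxEle; case: (leP b c) => ?; case: (leP a c) => ?; case: (leP a b) => ?; split; lra. Qed.

Arguments maxge {R}.

Lemma mM d (T : measurableType d) (R : realType) (k : R) (f : T -> R) :
  measurable_fun setT f -> measurable_fun setT (fun x => k * f x).
Proof. by move=> mf; apply: (measurable_funM (f := cst k)). Qed.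

Lemma iN d (T : measurableType d) (R : realType) (mu : {measure set T -> \bar R}) (f : T -> R) :
  mu.-integrable setT (EFin \o f) ->
  mu.-integrable setT (EFin \o (fun x => - f x)).
Proof. by move=> hf; apply: eq_integrable (integrableN hf) => // x _; rewrite /= EFinN. Qed.
Arguments iN {d T R mu f}.

Lemma RN d (T : measurableType d) (R : realType) (mu : {measure set T -> \bar R}) (f : T -> R) :
  mu.-integrable setT (EFin \o f) ->
  Rintegral mu setT (fun x => - f x) = - Rintegral mu setT f.
Proof.
move=> hf; rewrite -mulN1r -RintegralZl //.
by apply: eq_Rintegral => x _; rewrite mulN1r.
Qed.

Ltac ints := repeat first [apply: iD | apply: iB | apply: iZ | apply: iN | eassumption].

Theorem theorem1 (R : realType) (n : nat) (psi1 psi2 : 'cV[R[i]]_n)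
  (alpha beta : R)
  (d : measure_display) (L : measurableType d) (dl : {measure set L -> \bar R})
  (mu1 mu2 : L -> R)
  (xi : forall k, ('I_k -> 'M[R[i]]_n) -> 'I_k -> L -> R) :
  unit_vector psi1 -> unit_vector psi2 ->
  0 <= alpha <= 1 -> 0 <= beta <= 1 ->
  ontological_model psi1 psi2 dl mu1 mu2 xi ->
  ((S_Q psi1 psi2 alpha beta)%:E <= S_Lam dl mu1 mu2 alpha beta)%E /\
  S_Lam dl mu1 mu2 alpha beta = (1 - (2^-1)%:E * omega_Lam dl mu1 mu2 alpha beta)%E.
Proof.
move=> _ _ /andP[a0 a1] /andP[b0 b1] [[m1 m2] [p1 p2] [i1 i2] Hxi].
have int1 : dl.-integrable setT (EFin \o mu1).
  apply/integrableP; split; first exact/measurable_EFinP.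
  rewrite (eq_integral (fun l => (mu1 l)%:E)) ?i1 ?ltry // => x _ /=.
  by rewrite ger0_norm.
have int2 : dl.-integrable setT (EFin \o mu2).
  apply/integrableP; split; first exact/measurable_EFinP.
  rewrite (eq_integral (fun l => (mu2 l)%:E)) ?i2 ?ltry // => x _ /=.
  by rewrite ger0_norm.
have R1 : Rintegral dl setT mu1 = 1 by rewrite /Rintegral i1.
have R2 : Rintegral dl setT mu2 = 1 by rewrite /Rintegral i2.
set f1 := mut1 mu1 beta; set f2 := mut2 mu2 beta; set f3 := mut3 mu1 mu2 alpha beta.
have f1n l : 0 <= f1 l by rewrite /f1 /mut1 mulr_ge0 // addr_ge0.
have f2n l : 0 <= f2 l by rewrite /f2 /mut2 mulr_ge0 // addr_ge0.
have f3n l : 0 <= f3 l by rewrite /f3 /mut3 mulr_ge0 // addr_ge0.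
have mf1 : measurable_fun setT f1 by exact: mM.
have mf2 : measurable_fun setT f2 by exact: mM.
have mf3 : measurable_fun setT f3 by apply: mM; exact: measurable_funD.
have if1 : dl.-integrable setT (EFin \o f1) by ints.
have if2 : dl.-integrable setT (EFin \o f2) by ints.
have if3 : dl.-integrable setT (EFin \o f3) by rewrite /f3 /mut3; ints.
have ifs : dl.-integrable setT (EFin \o (fun l => f1 l + f2 l + f3 l)) by ints.
have I1 : Rintegral dl setT f1 = 1 + beta by rewrite /f1 /mut1 RintegralZl // R1 mulr1.
have I2 : Rintegral dl setT f2 = 1 + beta by rewrite /f2 /mut2 RintegralZl // R2 mulr1.
have I3 : Rintegral dl setT f3 = (alpha + beta) * 2.
  by rewrite /f3 /mut3 RintegralZl ?RintegralD // ?R1 ?R2 //; ints.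
set g := fun l => Num.max (f1 l) (Num.max (f2 l) (f3 l)).
have ig : dl.-integrable setT (EFin \o g).
  apply: (@ile _ _ _ dl g (fun l => f1 l + f2 l + f3 l) _ _ ifs); last by move=> l; exact: nbmax.
  by apply: measurable_maxr => //; exact: measurable_maxr.
have Ig : 1 + beta <= Rintegral dl setT g.
  rewrite -I1; apply: le_Rintegral => // l _.
  by case: (maxge (f1 l) (f2 l) (f3 l)).
have SL : S_Lam dl mu1 mu2 alpha beta = (2^-1 * Rintegral dl setT g - beta)%:E.
  by rewrite /S_Lam -/f1 -/f2 -/f3 (iE ig) EFinB EFinM.
pose m12 := fun l => Num.min (f1 l) (f2 l).
pose m13 := fun l => Num.min (f1 l) (f3 l).
pose m23 := fun l => Num.min (f2 l) (f3 l).
pose m123 := fun l => Num.min (f1 l) (Num.min (f2 l) (f3 l)).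
have im12 : dl.-integrable setT (EFin \o m12).
  apply: (@ile _ _ _ dl _ (fun l => f1 l + f2 l + f3 l) _ _ ifs) => [|l].
    exact: measurable_minr.
  by move: (f1n l) (f2n l) (f3n l) => *; apply: nbmin; lra.
have im13 : dl.-integrable setT (EFin \o m13).
  apply: (@ile _ _ _ dl _ (fun l => f1 l + f2 l + f3 l) _ _ ifs) => [|l].
    exact: measurable_minr.
  by move: (f1n l) (f2n l) (f3n l) => *; apply: nbmin; lra.
have im23 : dl.-integrable setT (EFin \o m23).
  apply: (@ile _ _ _ dl _ (fun l => f1 l + f2 l + f3 l) _ _ ifs) => [|l].
    exact: measurable_minr.
  by move: (f1n l) (f2n l) (f3n l) => *; apply: nbmin; lra.
have im123 : dl.-integrable setT (EFin \o m123).
  apply: (@ile _ _ _ dl _ (fun l => f1 l + f2 l + f3 l) _ _ ifs) => [|l].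
    by apply: measurable_minr => //; exact: measurable_minr.
  by apply: nbmin3.
have Eg : Rintegral dl setT g = Rintegral dl setT
   (fun l => f1 l + f2 l + f3 l - m12 l - m13 l - m23 l + m123 l).
  by apply: eq_Rintegral => l _; exact: max3.
rewrite RintegralD // ?RintegralB // ?RintegralB // ?RintegralB // ?RintegralD // ?RintegralD // in Eg; try ints.
rewrite I1 I2 I3 in Eg.
split.
  rewrite SL lee_fin /S_Q.
  set A := [set r | _].
  have ub : ubound A (2^-1 * Rintegral dl setT g - beta).
    move=> r [M [HM ->]].
    have [mx px sx e1 e2] := Hxi 3 M HM.
    have s3 l : xi 3 M 0 l + xi 3 M 1 l + xi 3 M 2 l = 1.
      rewrite -(sx l) !big_ord_recl big_ord0 addr0 addrA.
      have E0 : (ord0 : 'I_3) = 0 by apply/val_inj.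
      have E1 : (lift ord0 ord0 : 'I_3) = 1 by apply/val_inj.
      have E2 : (lift ord0 (lift ord0 ord0) : 'I_3) = 2 by apply/val_inj.
      by rewrite E2 E1 E0.
    have xle i l : xi 3 M i l <= 1.
      have := sx l; rewrite (bigD1 i) //= => <-.
      by rewrite lerDl sumr_ge0 // => j _; exact: px.
    have iq1 i : dl.-integrable setT (EFin \o (fun l => mu1 l * xi 3 M i l)).
      apply: (@ile _ _ _ dl _ mu1 _ _ int1) => [|l]; first exact: measurable_funM.
      have := xle i l; have := px i l; have := p1 l => *.
      rewrite ger0_norm ?mulr_ge0 //; nra.
    have iq2 i : dl.-integrable setT (EFin \o (fun l => mu2 l * xi 3 M i l)).
      apply: (@ile _ _ _ dl _ mu2 _ _ int2) => [|l]; first exact: measurable_funM.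
      have := xle i l; have := px i l; have := p2 l => *.
      rewrite ger0_norm ?mulr_ge0 //; nra.
    have P1 i : prob psi1 M i = Rintegral dl setT (fun l => mu1 l * xi 3 M i l).
      by have := e1 i; rewrite (iE (iq1 i)) => -[].
    have P2 i : prob psi2 M i = Rintegral dl setT (fun l => mu2 l * xi 3 M i l).
      by have := e2 i; rewrite (iE (iq2 i)) => -[].
    rewrite !P1 !P2.
    have key : Rintegral dl setT (fun l => mu1 l * xi 3 M 0 l - beta * (mu1 l * xi 3 M 1 l)
        + alpha * (mu1 l * xi 3 M 2 l) + mu2 l * xi 3 M 1 l - beta * (mu2 l * xi 3 M 0 l)
        + alpha * (mu2 l * xi 3 M 2 l))
      <= Rintegral dl setT (fun l => g l - beta * mu1 l - beta * mu2 l).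
      apply: le_Rintegral => //;
        [repeat first [apply: iD | apply: iB | apply: iZ | apply: iN | apply: iq1 | apply: iq2 | eassumption]..|].
      move=> l _; case: (maxge (f1 l) (f2 l) (f3 l)).
      rewrite /g /f1 /f2 /f3 /mut1 /mut2 /mut3.
      move: (s3 l) (px 0 l) (px 1 l) (px 2 l) (p1 l) (p2 l) => *.
      nra.
    rewrite RintegralD // ?RintegralB // ?RintegralD // ?RintegralB // ?RintegralD // in key;
      try (repeat first [apply: iD | apply: iB | apply: iZ | apply: iN | apply: iq1 | apply: iq2 | eassumption]).
    rewrite !RN in key; try (repeat first [apply: iZ | apply: iq1 | apply: iq2 | eassumption]).
    rewrite !RintegralZl // R1 R2 in key; try (repeat first [apply: iq1 | apply: iq2 | eassumption]).
    lra.
  case: (pselect (A !=set0)) => [ne|ne]; first exact: ge_sup ne ub.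
  rewrite sup_out; last by case.
  lra.
rewrite SL /omega_Lam /T1 /T2 /T3 /T4 -/f1 -/f2 -/f3.
rewrite (iE im12) (iE im13) (iE im23) (iE im123).
rewrite -?EFinB -?EFinD -?EFinB -?EFinD -?EFinM -?EFinB; congr EFin.
lra.
Qed.
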